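(* Let $(x_n)$ be a nonincreasing interval-filling sequence of positive reals with cardinal function $f$ such that the strict inequality $r_k>x_k$ holds for exactly one index $k\in\mathbb{N}$. Then $\mathrm{rng}(f)$ equals either $\{1,2,3\}$ or $\{1,2,3,4\}$.
   Context: For a summable sequence $\mathbf{x}=(x_n)$ of positive reals, $\mathcal{A}(\mathbf{x})=\{\sum_{n\in A}x_n: A\subseteq\mathbb{N}\}$ is its achievement set and its cardinal function $f$ assigns to $x\in\mathcal{A}(\mathbf{x})$ the cardinality (a positive integer, $\omega$, or $\mathfrak{c}$) of $\{(\varepsilon_n)\in\{0,1\}^{\mathbb{N}}:\sum\varepsilon_nx_n=x\}$. The sequence is interval-filling if $\mathcal{A}(\mathbf{x})$ is an interval (equivalently $x_n\le r_n$ for all $n$). The tail sums are $r_n=\sum_{k=n+1}^\infty x_k$. *)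

(* Defs.v *)
From Stdlib Require Import Reals List.
From Coquelicot Require Import Coquelicot.
Open Scope R_scope.

(* A sequence x_1, x_2, ... is represented by a : nat -> R with a n = x_{n+1}. *)

Definition represents (a : nat -> R) (e : nat -> bool) (s : R) : Prop :=
  is_series (fun n => if e n then a n else 0) s.

Definition achievement_set (a : nat -> R) (s : R) : Prop :=
  exists e : nat -> bool, represents a e s.

(* Tail sums r_n = sum_{k > n} x_k  (in 0-based indexing: sum_{k >= n+1} a k). *)
Definition tail_sum (a : nat -> R) (n : nat) : R :=
  Series (fun k => a (n + 1 + k)%nat).

Definition interval_filling (a : nat -> R) : Prop :=
  forall u v w : R, achievement_set a u -> achievement_set a w ->
    u <= v <= w -> achievement_set a v.

Definition card_fun_eq (a : nat -> R) (s : R) (m : nat) : Prop :=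
  exists l : list (nat -> bool),
    NoDup l /\ length l = m /\ (forall e, In e l <-> represents a e s).

Definition range_card_fun_eq (a : nat -> R) (M : nat -> Prop) : Prop :=
  (forall s, achievement_set a s -> exists m, M m /\ card_fun_eq a s m) /\
  (forall m, M m -> exists s, achievement_set a s /\ card_fun_eq a s m).

(* Main.v *)
Require Import Defs.
From Stdlib Require Import Reals List Lra Lia Classical FunctionalExtensionality Bool ZArith.
From Coquelicot Require Import Coquelicot.
Open Scope R_scope.

Definition tm (a : nat -> R) (e : nat -> bool) (n : nat) : R := if e n then a n else 0.
Definition val (a : nat -> R) (e : nat -> bool) : R := Series (tm a e).

Lemma ex_tm a e : (forall n, 0 < a n) -> ex_series a -> ex_series (tm a e).
Proof.
  intros Hp Hx. apply (@ex_series_le R_AbsRing R_CompleteNormedModule _ a); auto.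
  intros n. change (norm (tm a e n)) with (Rabs (tm a e n)). unfold tm.
  destruct (e n). rewrite Rabs_pos_eq; [lra| apply Rlt_le, Hp].
  rewrite Rabs_R0. apply Rlt_le, Hp.
Qed.

Lemma val_ext a e e' : (forall n, e n = e' n) -> val a e = val a e'.
Proof. intros H. unfold val. apply Series_ext. intros n. unfold tm. now rewrite H. Qed.

Lemma val_split a e p : (forall n, 0 < a n) -> ex_series a ->
  val a e = val a (fun n => e n && p n) + val a (fun n => e n && negb (p n)).
Proof.
  intros Hp Hx. unfold val. rewrite <- Series_plus by (apply ex_tm; auto).
  apply Series_ext. intros n. unfold tm. destruct (e n), (p n); simpl; lra.
Qed.

Lemma val_mono a e e' : (forall n, 0 < a n) -> ex_series a ->
  (forall n, e n = true -> e' n = true) -> val a e <= val a e'.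
Proof.
  intros Hp Hx H. unfold val. apply Series_le; [|apply ex_tm; auto].
  intros n. unfold tm. specialize (H n). specialize (Hp n).
  destruct (e n), (e' n); try lra.
Qed.

Lemma val_zero a : val a (fun _ => false) = 0.
Proof.
  unfold val. rewrite (Series_ext _ (fun n => 0 * a n)).
  rewrite Series_scal_l. ring. intros n; unfold tm; simpl; ring.
Qed.

Lemma val_nonneg a e : (forall n, 0 < a n) -> ex_series a -> 0 <= val a e.
Proof.
  intros Hp Hx. rewrite <- (val_zero a). apply val_mono; auto.
Qed.

Lemma val_pt a p : (forall n, 0 < a n) -> ex_series a -> val a (fun n => Nat.eqb n p) = a p.
Proof.
  intros Hp Hx. unfold val.
  rewrite (Series_incr_n_aux _ p).
  2:{ intros k Hk. unfold tm. destruct (Nat.eqb_spec k p); [lia|auto]. }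
  rewrite (Series_incr_n _ 1); [|lia|].
  2:{ apply (ex_series_incr_n (tm a (fun n => Nat.eqb n p))). apply ex_tm; auto. }
  simpl. rewrite (Series_ext _ (fun n => 0 * a n)).
  rewrite Series_scal_l. unfold tm. rewrite Nat.add_0_r, Nat.eqb_refl. ring.
  intros n. unfold tm. destruct (Nat.eqb_spec (p + S n) p); [lia|ring].
Qed.

Lemma val_all a : val a (fun _ => true) = Series a.
Proof. unfold val, tm. apply Series_ext. auto. Qed.

Lemma val_tail a j : (forall n, 0 < a n) -> ex_series a ->
  val a (fun n => Nat.ltb j n) = tail_sum a j.
Proof.
  intros Hp Hx. unfold val, tail_sum.
  rewrite (Series_incr_n_aux _ (j+1)).
  2:{ intros k Hk. unfold tm. destruct (Nat.ltb_spec j k); [lia|auto]. }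
  apply Series_ext. intros n. unfold tm. destruct (Nat.ltb_spec j (j+1+n)); [auto|lia].
Qed.

Lemma rep_iff a e s : (forall n, 0 < a n) -> ex_series a ->
  (represents a e s <-> val a e = s).
Proof.
  intros Hp Hx. unfold represents. split; intros H.
  - apply is_series_unique. exact H.
  - rewrite <- H. apply (Series_correct (tm a e)). apply ex_tm; auto.
Qed.
Lemma val3 a e j : (forall n, 0 < a n) -> ex_series a ->
  val a e = val a (fun n => e n && Nat.ltb n j) + tm a e j + val a (fun n => e n && Nat.ltb j n).
Proof.
  intros Hp Hx. rewrite (val_split a e (fun n => Nat.ltb n j)) by auto.
  rewrite (val_split a (fun n => e n && negb (Nat.ltb n j)) (fun n => Nat.eqb n j)) by auto.
  rewrite Rplus_assoc. f_equal. f_equal.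
  - unfold tm. destruct (e j) eqn:E.
    + rewrite <- (val_pt a j) by auto. apply val_ext. intros n.
      destruct (Nat.eqb_spec n j); [subst; rewrite E, Nat.ltb_irrefl; auto|].
      rewrite !andb_false_r; auto.
    + rewrite <- (val_zero a). apply val_ext. intros n.
      destruct (Nat.eqb_spec n j); [subst; rewrite E; auto|].
      rewrite !andb_false_r; auto.
  - apply val_ext. intros n. destruct (e n); simpl; auto.
    destruct (Nat.ltb_spec n j), (Nat.eqb_spec n j), (Nat.ltb_spec j n); simpl; auto; lia.
Qed.

Lemma val_ge_pt a e m : (forall n, 0 < a n) -> ex_series a -> e m = true -> a m <= val a e.
Proof.
  intros Hp Hx H. rewrite <- (val_pt a m) by auto. apply val_mono; auto.
  intros n Hn. destruct (Nat.eqb_spec n m); [subst; auto|discriminate].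
Qed.

Lemma val_ge_pt2 a e m m' : (forall n, 0 < a n) -> ex_series a -> e m = true -> e m' = true ->
  m <> m' -> a m + a m' <= val a e.
Proof.
  intros Hp Hx H H' Hne.
  apply Rle_trans with (val a (fun n => Nat.eqb n m || Nat.eqb n m')).
  - rewrite (val_split a _ (fun n => Nat.eqb n m)) by auto.
    rewrite <- (val_pt a m), <- (val_pt a m') by auto. right. f_equal; apply val_ext; intros n;
    destruct (Nat.eqb_spec n m), (Nat.eqb_spec n m'); simpl; auto; lia.
  - apply val_mono; auto. intros n Hn.
    destruct (Nat.eqb_spec n m), (Nat.eqb_spec n m'); simpl in Hn; subst; auto; discriminate.
Qed.

Lemma nonincr a : (forall n, a (S n) <= a n) -> forall m j, (m <= j)%nat -> a j <= a m.
Proof.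
  intros H m j Hmj. induction Hmj. lra. specialize (H m0). lra.
Qed.

Lemma tail_nonneg a j : (forall n, 0 < a n) -> ex_series a -> 0 <= tail_sum a j.
Proof. intros. rewrite <- val_tail by auto. apply val_nonneg; auto. Qed.

Lemma IF_le a j : (forall n, 0 < a n) -> ex_series a -> (forall n, a (S n) <= a n) ->
  interval_filling a -> a j <= tail_sum a j.
Proof.
  intros Hp Hx Hm HI. destruct (Rle_or_lt (a j) (tail_sum a j)) as [|Hlt]; auto.
  exfalso. set (v := (tail_sum a j + a j) / 2).
  pose proof (tail_nonneg a j Hp Hx).
  assert (Hj : a j <= Series a).
  { rewrite <- val_all. apply val_ge_pt; auto. }
  assert (A0 : achievement_set a 0).
  { exists (fun _ => false). apply rep_iff; auto; apply val_zero. }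
  assert (A1 : achievement_set a (Series a)).
  { exists (fun _ => true). apply rep_iff; auto; apply val_all. }
  assert (Hb : 0 <= v <= Series a) by (unfold v; lra).
  destruct (HI 0 v (Series a) A0 A1 Hb) as [e He].
  { apply rep_iff in He; auto.
    destruct (classic (exists m, (m <= j)%nat /\ e m = true)) as [[m [Hmj Hm']]|Hn].
    + pose proof (val_ge_pt a e m Hp Hx Hm'). pose proof (nonincr a Hm m j Hmj).
      unfold v in He; lra.
    + assert (val a e <= tail_sum a j).
      { rewrite <- val_tail by auto. apply val_mono; auto. intros n Hn'.
        destruct (Nat.ltb_spec j n); auto. exfalso. apply Hn. exists n; split; auto; lia. }
      unfold v in He; lra. }
Qed.

Lemma tail_step a j : (forall n, 0 < a n) -> ex_series a ->
  tail_sum a j = a (S j) + tail_sum a (S j).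
Proof.
  intros Hp Hx. rewrite <- !val_tail by auto.
  rewrite (val_split a _ (fun n => Nat.eqb n (S j))) by auto.
  rewrite <- (val_pt a (S j)) by auto. f_equal; apply val_ext; intros n;
  destruct (Nat.eqb_spec n (S j)), (Nat.ltb_spec j n), (Nat.ltb_spec (S j) n); simpl; auto; lia.
Qed.
Lemma L1 a x y j : (forall n, 0 < a n) -> ex_series a ->
  val a x = val a y -> (forall m, (m < j)%nat -> x m = y m) -> x j = true -> y j = false ->
  a j = tail_sum a j -> forall m, (j < m)%nat -> x m = false /\ y m = true.
Proof.
  intros Hp Hx Hv Hag Hxj Hyj Ht.
  rewrite (val3 a x j), (val3 a y j) in Hv by auto.
  assert (Hlo : val a (fun n => x n && Nat.ltb n j) = val a (fun n => y n && Nat.ltb n j)).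
  { apply val_ext. intros n. destruct (Nat.ltb_spec n j); [rewrite Hag; auto|].
    rewrite !andb_false_r; auto. }
  unfold tm in Hv. rewrite Hxj, Hyj, Hlo in Hv.
  assert (HBy : val a (fun n => y n && Nat.ltb j n) <= tail_sum a j).
  { rewrite <- val_tail by auto. apply val_mono; auto. intros n Hn.
    destruct (y n), (Nat.ltb j n); auto. }
  pose proof (val_nonneg a (fun n => x n && Nat.ltb j n) Hp Hx) as HBx.
  intros m Hm. split.
  - destruct (x m) eqn:E; auto. exfalso.
    assert (a m <= val a (fun n => x n && Nat.ltb j n)).
    { apply val_ge_pt; auto. rewrite E. apply Nat.ltb_lt; auto. }
    specialize (Hp m). lra.
  - destruct (y m) eqn:E; auto. exfalso.
    assert (val a (fun n => y n && Nat.ltb j n) <= val a (fun n => Nat.ltb j n && negb (Nat.eqb n m))).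
    { apply val_mono; auto. intros n Hn. destruct (Nat.eqb_spec n m); [subst; rewrite E in Hn; discriminate|].
      destruct (y n), (Nat.ltb j n); simpl in *; auto. }
    assert (val a (fun n => Nat.ltb j n && Nat.eqb n m) = a m).
    { rewrite <- (val_pt a m) by auto. apply val_ext. intros n.
      destruct (Nat.eqb_spec n m); [subst; rewrite (proj2 (Nat.ltb_lt _ _) Hm); auto|].
      rewrite andb_false_r; auto. }
    pose proof (val_split a (fun n => Nat.ltb j n) (fun n => Nat.eqb n m) Hp Hx).
    rewrite val_tail in H1 by auto.
    specialize (Hp m). lra.
Qed.

Lemma least (P : nat -> Prop) : (exists n, P n) -> exists n, P n /\ forall m, (m < n)%nat -> ~ P m.
Proof.
  intros [n Hn]. apply NNPP. intros Hno.
  assert (forall N, forall m, (m <= N)%nat -> ~ P m).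
  { induction N; intros m Hm Pm.
    - apply Hno. exists m. split; auto. intros; lia.
    - apply Hno. exists m. split; auto. intros m' Hm'. apply IHN. lia. }
  apply (H n n); auto.
Qed.

Lemma L1s a x y j k : (forall n, 0 < a n) -> ex_series a ->
  (forall i, i <> k -> a i = tail_sum a i) ->
  val a x = val a y -> (forall m, (m < j)%nat -> x m = y m) -> x j <> y j -> x k = y k ->
  forall m, (j < m)%nat -> x m = y j /\ y m = x j.
Proof.
  intros Hp Hx Hs Hv Hag Hne Hk m Hm.
  assert (j <> k) by (intro; subst; auto).
  destruct (x j) eqn:Ex, (y j) eqn:Ey; try congruence.
  - destruct (L1 a x y j Hp Hx Hv Hag Ex Ey (Hs j H) m Hm). auto.
  - destruct (L1 a y x j Hp Hx (eq_sym Hv) (fun m h => eq_sym (Hag m h)) Ey Ex (Hs j H) m Hm). auto.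
Qed.

Lemma triple a k x y z : (forall n, 0 < a n) -> ex_series a ->
  (forall i, i <> k -> a i = tail_sum a i) ->
  val a x = val a y -> val a x = val a z -> x k = y k -> x k = z k ->
  x = y \/ x = z \/ y = z.
Proof.
  intros Hp Hx Hs Hxy Hxz Hky Hkz.
  destruct (classic (x = y)) as [|Hne]; auto.
  assert (exists j, x j <> y j) as Hd.
  { apply NNPP. intros Hn. apply Hne. apply functional_extensionality. intros n.
    destruct (bool_dec (x n) (y n)); auto. exfalso; apply Hn; eauto. }
  destruct (least _ Hd) as [j [Hj Hjl]].
  assert (Agxy : forall m, (m < j)%nat -> x m = y m).
  { intros m Hm. destruct (bool_dec (x m) (y m)); auto. exfalso; eapply Hjl; eauto. }
  pose proof (L1s a x y j k Hp Hx Hs Hxy Agxy Hj Hky) as Fxy.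
  destruct (classic (forall m, (m <= j)%nat -> z m = x m)) as [Hz|Hz].
  - right; left. apply functional_extensionality. intros n.
    destruct (Nat.le_gt_cases n j) as [Hn|Hn]; [symmetry; auto|].
    assert (Agzy : forall m, (m < j)%nat -> z m = y m).
    { intros m Hm. rewrite Hz by lia. auto. }
    assert (z j <> y j) by (rewrite Hz; auto).
    destruct (L1s a z y j k Hp Hx Hs (eq_trans (eq_sym Hxz) Hxy) Agzy H (eq_trans (eq_sym Hkz) Hky) n Hn).
    destruct (Fxy n Hn). congruence.
  - assert (exists i, (i <= j)%nat /\ z i <> x i) as Hd2.
    { apply NNPP. intros Hn. apply Hz. intros m Hm. destruct (bool_dec (z m) (x m)); auto.
      exfalso; apply Hn; eauto. }
    destruct (least _ Hd2) as [i [[Hij Hi] Hil]].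
    assert (Agxz : forall m, (m < i)%nat -> x m = z m).
    { intros m Hm. destruct (bool_dec (z m) (x m)); auto. exfalso; eapply Hil; eauto. split; auto; lia. }
    pose proof (L1s a x z i k Hp Hx Hs Hxz Agxz (fun h => Hi (eq_sym h)) Hkz) as Fxz.
    destruct (Nat.eq_dec i j) as [->|Hij'].
    + right; right. apply functional_extensionality. intros n.
      destruct (Nat.lt_total n j) as [Hn|[->|Hn]].
      * rewrite <- Agxz, Agxy by auto. auto.
      * destruct (x j), (y j), (z j); congruence.
      * destruct (Fxy n Hn), (Fxz n Hn). congruence.
    + exfalso. apply Hne. apply functional_extensionality. intros n.
      assert (Agyz : forall m, (m < i)%nat -> y m = z m).
      { intros m Hm. rewrite <- Agxy by lia. auto. }
      assert (y i <> z i) by (rewrite <- Agxy by lia; auto).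
      pose proof (L1s a y z i k Hp Hx Hs (eq_trans (eq_sym Hxy) Hxz) Agyz H (eq_trans (eq_sym Hky) Hkz)) as Fyz.
      destruct (Nat.le_gt_cases n i) as [Hn|Hn].
      * apply Agxy. lia.
      * destruct (Fyz n Hn), (Fxz n Hn). congruence.
Qed.
Lemma pair_len {A} (l : list A) : NoDup l ->
  (forall x y z, In x l -> In y l -> In z l -> x = y \/ x = z \/ y = z) -> (length l <= 2)%nat.
Proof.
  intros Hn H. destruct l as [|x [|y [|z r]]]; simpl; try lia.
  exfalso. inversion Hn; subst. inversion H3; subst.
  destruct (H x y z) as [E|[E|E]]; simpl; auto; subst.
  - apply H2; simpl; auto.
  - apply H2; simpl; auto.
  - apply H4; simpl; auto.
Qed.

Lemma bound4 a k s l : (forall n, 0 < a n) -> ex_series a ->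
  (forall i, i <> k -> a i = tail_sum a i) ->
  NoDup l -> (forall e, In e l -> val a e = s) -> (length l <= 4)%nat.
Proof.
  intros Hp Hx Hs Hn Hl. rewrite <- (filter_length (fun e => e k) l).
  assert (forall b, (length (filter (fun e => Bool.eqb (e k) b) l) <= 2)%nat).
  { intros b. apply pair_len. apply NoDup_filter; auto.
    intros x y z Hx' Hy' Hz'. apply filter_In in Hx', Hy', Hz'.
    destruct Hx' as [Hx1 Hx2], Hy' as [Hy1 Hy2], Hz' as [Hz1 Hz2].
    apply Bool.eqb_prop in Hx2, Hy2, Hz2.
    apply (triple a k); auto. rewrite Hl, Hl; auto. rewrite Hl, Hl; auto. congruence. congruence. }
  pose proof (H true). pose proof (H false).
  assert (filter (fun e => e k) l = filter (fun e => Bool.eqb (e k) true) l) as ->.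
  { apply filter_ext. intros e; destruct (e k); auto. }
  assert (filter (fun e => negb (e k)) l = filter (fun e => Bool.eqb (e k) false) l) as ->.
  { apply filter_ext. intros e; destruct (e k); auto. }
  lia.
Qed.

Lemma enum (P : (nat -> bool) -> Prop) :
  (forall l, NoDup l -> (forall e, In e l -> P e) -> (length l <= 4)%nat) ->
  exists l, NoDup l /\ (length l <= 4)%nat /\ forall e, In e l <-> P e.
Proof.
  intros HB.
  assert (forall d l, NoDup l -> (forall e, In e l -> P e) -> (4 - length l <= d)%nat ->
    exists l', NoDup l' /\ (length l' <= 4)%nat /\ forall e, In e l' <-> P e).
  { induction d; intros l Hn Hl Hd.
    - destruct (classic (forall e, P e -> In e l)) as [Hc|Hc].
      + exists l. split; [auto|split; [apply HB; auto|firstorder]].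
      + exfalso. apply not_all_ex_not in Hc. destruct Hc as [e He].
        apply imply_to_and in He. destruct He as [He1 He2].
        assert (length (e :: l) <= 4)%nat.
        { apply HB. constructor; auto. intros e' [<-|]; auto. }
        simpl in H. lia.
    - destruct (classic (forall e, P e -> In e l)) as [Hc|Hc].
      + exists l. split; [auto|split; [apply HB; auto|firstorder]].
      + apply not_all_ex_not in Hc. destruct Hc as [e He].
        apply imply_to_and in He. destruct He as [He1 He2].
        apply (IHd (e :: l)). constructor; auto. intros e' [<-|]; auto.
        replace (length (e :: l)) with (S (length l)) by reflexivity; lia. }
  apply (H 4%nat nil). constructor. intros e []. simpl; lia.
Qed.
Lemma val_ptm a e p : (forall n, 0 < a n) -> ex_series a ->
  val a (fun n => e n && Nat.eqb n p) = tm a e p.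
Proof.
  intros Hp Hx. unfold tm. destruct (e p) eqn:E.
  - rewrite <- (val_pt a p) by auto. apply val_ext. intros n.
    destruct (Nat.eqb_spec n p); [subst; rewrite E; auto| rewrite andb_false_r; auto].
  - rewrite <- (val_zero a). apply val_ext. intros n.
    destruct (Nat.eqb_spec n p); [subst; rewrite E; auto| rewrite andb_false_r; auto].
Qed.

Lemma val_add a e p : (forall n, 0 < a n) -> ex_series a -> e p = false ->
  val a (fun n => e n || Nat.eqb n p) = val a e + a p.
Proof.
  intros Hp Hx H. rewrite (val_split a _ (fun n => Nat.eqb n p)) by auto.
  rewrite val_ptm by auto. unfold tm. rewrite Nat.eqb_refl, orb_true_r.
  rewrite Rplus_comm. f_equal. apply val_ext. intros n.
  destruct (Nat.eqb_spec n p); [subst; rewrite H|]; simpl; auto.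
  rewrite orb_false_r, andb_true_r. auto.
Qed.

Lemma geo a k : (forall n, 0 < a n) -> ex_series a ->
  (forall i, i <> k -> a i = tail_sum a i) ->
  forall i, a (S k + i)%nat = a (S k) / 2 ^ i.
Proof.
  intros Hp Hx Hs i. induction i.
  - rewrite Nat.add_0_r. simpl. field.
  - rewrite Nat.add_succ_r. pose proof (Hs (S k + i)%nat ltac:(lia)).
    rewrite tail_step in H by auto. rewrite <- (Hs (S (S k + i))) in H by lia.
    simpl pow. apply (f_equal (fun u => u / 2)) in H. rewrite IHi in H.
    assert (2 ^ i <> 0) by (apply pow_nonzero; lra).
    rewrite <- Rmult_1_l. rewrite <- Rmult_1_l in H. field_simplify; auto.
    field_simplify in H; auto. lra.
Qed.

Lemma tail_k a k : (forall n, 0 < a n) -> ex_series a ->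
  (forall i, i <> k -> a i = tail_sum a i) -> tail_sum a k = 2 * a (S k).
Proof.
  intros Hp Hx Hs. rewrite tail_step by auto. rewrite <- (Hs (S k)) by lia. ring.
Qed.

Lemma companion a k f L : (forall n, 0 < a n) -> ex_series a ->
  (forall i, i <> k -> a i = tail_sum a i) -> L <> k -> f L = true -> (forall n, (L < n)%nat -> f n = false) ->
  val a (fun n => if Nat.ltb n L then f n else if Nat.eqb n L then false else true) = val a f.
Proof.
  intros Hp Hx Hs HL HfL Hf. set (g := fun n => if Nat.ltb n L then f n else if Nat.eqb n L then false else true).
  rewrite (val3 a f L), (val3 a g L) by auto.
  assert (E1 : val a (fun n => g n && Nat.ltb n L) = val a (fun n => f n && Nat.ltb n L)).
  { apply val_ext. intros n. unfold g. destruct (Nat.ltb n L); auto. rewrite !andb_false_r; auto. }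
  assert (E2 : val a (fun n => f n && Nat.ltb L n) = 0).
  { rewrite <- (val_zero a). apply val_ext. intros n. destruct (Nat.ltb_spec L n); [rewrite Hf; auto|].
    rewrite andb_false_r; auto. }
  assert (E3 : val a (fun n => g n && Nat.ltb L n) = a L).
  { rewrite (Hs L HL), <- val_tail by auto. apply val_ext. intros n. unfold g.
    destruct (Nat.ltb_spec n L), (Nat.eqb_spec n L), (Nat.ltb_spec L n); simpl; auto; lia. }
  assert (E4 : tm a g L = 0) by (unfold tm, g; rewrite Nat.ltb_irrefl, Nat.eqb_refl; auto).
  assert (E5 : tm a f L = a L) by (unfold tm; rewrite HfL; auto).
  rewrite E1, E2, E3, E4, E5. ring.
Qed.
Lemma fin_val a k : (forall n, 0 < a n) -> ex_series a ->
  (forall i, i <> k -> a i = tail_sum a i) ->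
  forall M f, (forall n, f n = true -> (S k <= n <= S k + M)%nat) ->
  exists q : nat, val a f = a (S k) * INR q / 2 ^ M.
Proof.
  intros Hp Hx Hs M. induction M; intros f Hf.
  - destruct (f (S k)) eqn:E.
    + exists 1%nat. rewrite <- (val_pt a (S k)) by auto. simpl. rewrite (val_ext a f (fun n => Nat.eqb n (S k))).
      field. intros n. destruct (Nat.eqb_spec n (S k)); [subst; auto|].
      destruct (f n) eqn:E'; auto. apply Hf in E'. lia.
    + exists 0%nat. rewrite (val_ext a f (fun _ => false)). rewrite val_zero. simpl. field.
      intros n. destruct (f n) eqn:E'; auto. pose proof (Hf n E'). assert (n = S k) by lia. congruence.
  - set (K := (S k + S M)%nat).
    rewrite (val_split a f (fun n => Nat.eqb n K)) by auto. rewrite val_ptm by auto.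
    destruct (IHM (fun n => f n && negb (Nat.eqb n K))) as [q Hq].
    { intros n Hn. destruct (f n) eqn:E; [|discriminate]. apply Hf in E.
      destruct (Nat.eqb_spec n K); [discriminate|]. unfold K in *. lia. }
    rewrite Hq. unfold tm. unfold K. rewrite (geo a k Hp Hx Hs (S M)).
    assert (2 ^ M <> 0) by (apply pow_nonzero; lra).
    destruct (f (S k + S M)%nat).
    + exists (2 * q + 1)%nat. rewrite plus_INR, mult_INR. simpl. field. auto.
    + exists (2 * q)%nat. rewrite mult_INR. simpl. field. auto.
Qed.

Lemma bin a k : (forall n, 0 < a n) -> ex_series a ->
  (forall i, i <> k -> a i = tail_sum a i) ->
  forall M q, (q < 2 ^ (S M))%nat -> exists f, (forall n, f n = true -> (S k <= n <= S k + M)%nat) /\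
  val a f = a (S k) * INR q / 2 ^ M.
Proof.
  intros Hp Hx Hs M. induction M; intros q Hq.
  - simpl in Hq. destruct q as [|[|q]]; try lia.
    + exists (fun _ => false). split; [discriminate|]. rewrite val_zero. simpl. field.
    + exists (fun n => Nat.eqb n (S k)). split.
      * intros n Hn. apply Nat.eqb_eq in Hn. lia.
      * rewrite val_pt by auto. simpl. field.
  - pose proof (Nat.div_mod q 2 ltac:(lia)) as Hd. pose proof (Nat.mod_upper_bound q 2 ltac:(lia)) as Hm.
    set (h := (q / 2)%nat) in *. set (r := (q mod 2)%nat) in *. clearbody h r.
    destruct (IHM h) as [f [Hf Hv]].
    { rewrite Nat.pow_succ_r' in Hq. rewrite Nat.pow_succ_r' in Hq |- *. generalize dependent (2 ^ M)%nat. intros. lia. }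
    set (K := (S k + S M)%nat).
    assert (2 ^ M <> 0) by (apply pow_nonzero; lra).
    assert (HfK : f K = false).
    { destruct (f K) eqn:E; auto. apply Hf in E. unfold K in E. lia. }
    destruct r as [|[|r']] eqn:Er; try lia.
    + exists f. split.
      * intros n Hn. apply Hf in Hn. lia.
      * rewrite Hv, Hd, Nat.add_0_r, mult_INR. simpl. field. auto.
    + exists (fun n => f n || Nat.eqb n K). split.
      * intros n Hn. destruct (f n) eqn:E; [apply Hf in E; lia|]. simpl in Hn. apply Nat.eqb_eq in Hn. unfold K in Hn. lia.
      * rewrite val_add by auto. rewrite Hv. unfold K. rewrite (geo a k Hp Hx Hs (S M)).
        rewrite Hd, plus_INR, mult_INR. simpl. field. auto.
Qed.
Lemma card_of_list a s l : (forall n, 0 < a n) -> ex_series a ->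
  NoDup l -> (forall e, In e l <-> val a e = s) -> card_fun_eq a s (length l).
Proof.
  intros Hp Hx Hn H. exists l. repeat split; auto.
  - intros Hi. apply rep_iff; auto. apply H; auto.
  - intros Hr. apply H. apply rep_iff; auto.
Qed.

Lemma count1 a : (forall n, 0 < a n) -> ex_series a -> card_fun_eq a 0 1.
Proof.
  intros Hp Hx. apply (card_of_list a 0 ((fun _ => false) :: nil)); auto.
  - constructor. intros []. constructor.
  - intros e. split.
    + intros [<-|[]]. apply val_zero.
    + intros H. left. apply functional_extensionality. intros n.
      destruct (e n) eqn:E; auto. pose proof (val_ge_pt a e n Hp Hx E). specialize (Hp n). lra.
Qed.

Lemma count2 a k : (forall n, 0 < a n) -> ex_series a -> (forall n, a (S n) <= a n) ->
  (forall i, i <> k -> a i = tail_sum a i) -> card_fun_eq a (a (S (S k))) 2.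
Proof.
  intros Hp Hx Hm Hs.
  set (p := fun n => Nat.eqb n (S (S k))). set (g := fun n => Nat.ltb (S (S k)) n).
  assert (Hpg : p <> g).
  { intros H. assert (p (S (S k)) = g (S (S k))) by (rewrite H; auto).
    unfold p, g in H0. rewrite Nat.eqb_refl, Nat.ltb_irrefl in H0. discriminate. }
  assert (Vp : val a p = a (S (S k))) by (apply val_pt; auto).
  assert (Vg : val a g = a (S (S k))) by (unfold g; rewrite val_tail by auto; rewrite <- Hs by lia; auto).
  apply (card_of_list a _ (p :: g :: nil)); auto.
  - constructor. intros [H|[]]; auto. constructor. intros []. constructor.
  - intros e. split.
    + intros [<-|[<-|[]]]; auto.
    + intros H.
      assert (Ek : e k = false).
      { destruct (e k) eqn:E; auto. pose proof (val_ge_pt a e k Hp Hx E).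
        pose proof (Hm k). rewrite (Hs (S k)), tail_step, <- (Hs (S (S k))) in H1 by (auto; lia).
        pose proof (Hp (S (S k))). lra. }
      assert (Pk : p k = false) by (unfold p; apply Nat.eqb_neq; lia).
      assert (Gk : g k = false) by (unfold g; apply Nat.ltb_ge; lia).
      destruct (triple a k e p g Hp Hx Hs) as [<-|[<-|E]]; simpl; auto; try congruence.
Qed.

Lemma greatest (P : nat -> Prop) B : (exists n, P n) -> (forall n, P n -> (n <= B)%nat) ->
  exists n, P n /\ forall m, (n < m)%nat -> ~ P m.
Proof.
  intros [n0 H0] HB. apply NNPP. intros Hno.
  assert (forall i, exists n, P n /\ (n0 + i <= n)%nat).
  { induction i. exists n0. split; auto; lia.
    destruct IHi as [n [Pn Hn]]. apply NNPP. intros Hc. apply Hno. exists n. split; auto.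
    intros m Hm Pm. apply Hc. exists m. split; auto. lia. }
  destruct (H (S B)) as [n [Pn Hn]]. apply HB in Pn. lia.
Qed.
Lemma below_k a k w : (forall n, 0 < a n) -> ex_series a -> (forall n, a (S n) <= a n) ->
  (forall i, i <> k -> a i = tail_sum a i) ->
  val a w < 2 * a (S k) -> forall m, (m < k)%nat -> w m = false.
Proof.
  intros Hp Hx Hm Hs Hv m Hmk. destruct (w m) eqn:E; auto. exfalso.
  pose proof (val_ge_pt a w m Hp Hx E).
  destruct k as [|k']; [lia|].
  pose proof (nonincr a Hm m k' ltac:(lia)).
  rewrite (Hs k'), tail_step, (tail_k a (S k')) in H0 by (auto; lia).
  pose proof (Hp (S k')). lra.
Qed.

Lemma INR_le_pow N : INR N <= 2 ^ N.
Proof.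
  induction N. simpl; lra. rewrite S_INR. simpl.
  assert (1 <= 2 ^ N) by (apply pow_R1_Rle; lra). lra.
Qed.

Lemma count3D a k q M : (forall n, 0 < a n) -> ex_series a -> (forall n, a (S n) <= a n) ->
  (forall i, i <> k -> a i = tail_sum a i) -> a k < tail_sum a k ->
  a k * 2 ^ M = a (S k) * INR q -> card_fun_eq a (a k) 3.
Proof.
  intros Hp Hx Hm Hs Hk Hq.
  rewrite (tail_k a k Hp Hx Hs) in Hk.
  assert (HM : 0 < 2 ^ M) by (apply pow_lt; lra).
  pose proof (Hp (S k)) as Hc.
  assert (Hqb : (q < 2 ^ S M)%nat).
  { apply INR_lt. rewrite pow_INR. replace (INR 2) with 2 by (simpl; lra). simpl pow.
    apply (Rmult_lt_reg_l (a (S k))); auto. rewrite <- Hq. nra. }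
  destruct (bin a k Hp Hx Hs M q Hqb) as [f [Hf Hvf]].
  assert (Hvf' : val a f = a k) by (rewrite Hvf, <- Hq; field; lra).
  assert (Hex : exists n, f n = true).
  { apply NNPP. intros Hn. assert (val a f = 0).
    { rewrite <- (val_zero a). apply val_ext. intros n. destruct (f n) eqn:E; auto. exfalso; eauto. }
    pose proof (Hp k). lra. }
  destruct (greatest (fun n => f n = true) (S k + M) Hex (fun n h => proj2 (Hf n h))) as [L [HfL HL]].
  assert (HLk : (S k <= L)%nat) by (apply Hf; auto).
  assert (HL' : forall n, (L < n)%nat -> f n = false).
  { intros n Hn. destruct (f n) eqn:E; auto. exfalso; eapply HL; eauto. }
  set (g := fun n => if Nat.ltb n L then f n else if Nat.eqb n L then false else true).
  assert (Hvg : val a g = a k) by (unfold g; rewrite (companion a k f L); auto; lia).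
  assert (Fk : f k = false) by (destruct (f k) eqn:E; auto; apply Hf in E; lia).
  assert (Gk : g k = false) by (unfold g; rewrite (proj2 (Nat.ltb_lt k L)) by lia; auto).
  set (p := fun n => Nat.eqb n k).
  assert (Pk : p k = true) by (apply Nat.eqb_refl).
  assert (GL : g L = false) by (unfold g; rewrite Nat.ltb_irrefl, Nat.eqb_refl; auto).
  apply (card_of_list a _ (p :: f :: g :: nil)); auto.
  - constructor. intros [H|[H|[]]]; [assert (f k = p k) by (rewrite H; auto) | assert (g k = p k) by (rewrite H; auto)]; congruence.
    constructor. intros [H|[]]. assert (g L = f L) by (rewrite H; auto). congruence.
    constructor. intros []. constructor.
  - intros e. split.
    + intros [<-|[<-|[<-|[]]]]; auto. apply val_pt; auto.
    + intros H. destruct (e k) eqn:Ek.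
      * left. apply functional_extensionality. intros n. unfold p.
        destruct (Nat.eqb_spec n k); [subst; auto|].
        destruct (e n) eqn:En; auto. pose proof (val_ge_pt2 a e k n Hp Hx Ek En ltac:(auto)).
        pose proof (Hp n). lra.
      * destruct (triple a k e f g Hp Hx Hs) as [<-|[<-|E]]; simpl; auto; try congruence.

Qed.
Lemma count3ND a k : (forall n, 0 < a n) -> ex_series a -> (forall n, a (S n) <= a n) ->
  (forall i, i <> k -> a i = tail_sum a i) -> a k < tail_sum a k -> interval_filling a ->
  ~ (exists (q : Z) (M : nat), a k * 2 ^ M = a (S k) * IZR q) ->
  exists s, achievement_set a s /\ card_fun_eq a s 3.
Proof.
  intros Hp Hx Hm Hs Hk HI Hnd.
  rewrite (tail_k a k Hp Hx Hs) in Hk.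
  set (c := a (S k)) in *.
  assert (Hc : 0 < c) by apply Hp.
  assert (Hck : c <= a k) by apply Hm.
  destruct (archimed_cor1 ((2 * c - a k) / c)) as [N [HN HN0]].
  { apply Rdiv_lt_0_compat; lra. }
  assert (HN2 : c / 2 ^ N < 2 * c - a k).
  { pose proof (INR_le_pow N). assert (0 < INR N) by (apply lt_0_INR; lia).
    assert (/ 2 ^ N <= / INR N) by (apply Rinv_le_contravar; lra).
    apply (Rmult_lt_compat_l c) in HN; auto.
    replace (c * ((2 * c - a k) / c)) with (2 * c - a k) in HN by (field; lra).
    unfold Rdiv. nra. }
  assert (HpN : 0 < 2 ^ N) by (apply pow_lt; lra).
  set (K := (S k + N)%nat).
  set (F := fun n => Nat.ltb k n && Nat.leb n K).
  assert (HvF : val a F = 2 * c - c / 2 ^ N).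
  { pose proof (val_split a (fun n => Nat.ltb k n) (fun n => Nat.leb n K) Hp Hx).
    rewrite val_tail, tail_k in H by auto.
    assert (val a (fun n => Nat.ltb k n && negb (Nat.leb n K)) = c / 2 ^ N).
    { unfold c. rewrite <- (geo a k Hp Hx Hs N). fold K. rewrite (Hs K) by (unfold K; lia).
      rewrite <- val_tail by auto. apply val_ext. intros n.
      destruct (Nat.ltb_spec k n), (Nat.leb_spec n K), (Nat.ltb_spec K n); simpl; auto; unfold K in *; lia. }
    fold c F in H. lra. }
  set (G := fun n => if Nat.ltb n K then F n else if Nat.eqb n K then false else true).
  assert (FK : F K = true).
  { unfold F. apply andb_true_intro; split; [apply Nat.ltb_lt|apply Nat.leb_le]; unfold K; lia. }
  assert (HvG : val a G = val a F).
  { unfold G. apply (companion a k F K); auto. unfold K; lia.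
    intros n Hn. unfold F. destruct (Nat.leb_spec n K); [lia|]. apply andb_false_r. }
  set (s := val a F) in *.
  set (z := s - a k).
  assert (Hz0 : 0 < z) by (unfold z; lra).
  assert (Hcn : 0 < c / 2 ^ N) by (apply Rdiv_lt_0_compat; lra).
  assert (Hzk : z < a k) by (unfold z; lra).
  assert (Hks : a k <= Series a) by (rewrite <- val_all; apply val_ge_pt; auto).
  destruct (HI 0 z (Series a)) as [ez Hez].
  { exists (fun _ => false). apply rep_iff; auto; apply val_zero. }
  { exists (fun _ => true). apply rep_iff; auto; apply val_all. }
  { lra. }
  apply rep_iff in Hez; auto.
  assert (Ezk : ez k = false).
  { destruct (ez k) eqn:E; auto. pose proof (val_ge_pt a ez k Hp Hx E). lra. }
  set (E := fun n => ez n || Nat.eqb n k).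
  assert (HvE : val a E = s) by (unfold E; rewrite val_add by auto; unfold z in Hez; lra).
  assert (Fk : F k = false) by (unfold F; rewrite Nat.ltb_irrefl; auto).
  assert (Gk : G k = false) by (unfold G; rewrite (proj2 (Nat.ltb_lt k K)) by (unfold K; lia); auto).
  assert (Ek : E k = true) by (unfold E; rewrite Nat.eqb_refl, orb_true_r; auto).
  assert (GK : G K = false) by (unfold G; rewrite Nat.ltb_irrefl, Nat.eqb_refl; auto).
  assert (Hs2 : s < 2 * c) by lra.
  exists s. split.
  { exists F. apply rep_iff; auto. }
  apply (card_of_list a _ (F :: G :: E :: nil)); auto.
  - constructor. intros [H|[H|[]]]; [assert (G K = F K) by (rewrite H; auto) | assert (E k = F k) by (rewrite H; auto)]; congruence.
    constructor. intros [H|[]]. assert (E k = G k) by (rewrite H; auto). congruence.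
    constructor. intros []. constructor.
  - intros e. split.
    + intros [<-|[<-|[<-|[]]]]; auto.
    + intros He. destruct (e k) eqn:Hek.
      * right; right; left. apply NNPP. intros Hne.
        assert (exists j, e j <> E j) as Hd.
        { apply NNPP. intros Hn. apply Hne. apply functional_extensionality. intros n.
          destruct (bool_dec (e n) (E n)); auto. exfalso; apply Hn; eauto. }
        destruct (least _ Hd) as [j [Hj Hjl]].
        assert (Ag : forall m, (m < j)%nat -> e m = E m).
        { intros m Hm'. destruct (bool_dec (e m) (E m)); auto. exfalso; eapply Hjl; eauto. }
        assert (Hjk : (k < j)%nat).
        { destruct (Nat.lt_total j k) as [Hl|[->|Hl]]; [|congruence|auto].
          exfalso. apply Hj. rewrite (below_k a k e), (below_k a k E); auto; fold c; lra. }
        pose proof (L1s a e E j k Hp Hx Hs (eq_trans He (eq_sym HvE)) Ag Hj (eq_trans Hek (eq_sym Ek))) as Fj.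
        assert (exists w, val a w = s /\ w k = true /\ w j = true /\ forall m, (j < m)%nat -> w m = false) as [w [Hw1 [Hw2 [Hw3 Hw4]]]].
        { destruct (e j) eqn:Ej.
          - exists e. repeat split; auto. intros m Hm'. destruct (Fj m Hm'). destruct (E j); congruence.
          - exists E. repeat split; auto. destruct (E j); congruence.
            intros m Hm'. destruct (Fj m Hm'). congruence. }
        set (w' := fun n => w n && negb (Nat.eqb n k)).
        assert (Hw' : val a w' = z).
        { assert (Hadd : val a (fun n => w' n || Nat.eqb n k) = val a w' + a k).
          { apply val_add; auto. unfold w'. rewrite Nat.eqb_refl, andb_false_r. auto. }
          rewrite (val_ext a _ w) in Hadd. unfold z; lra.
          intros n. unfold w'. destruct (Nat.eqb_spec n k); [subst; rewrite Hw2, orb_true_r; auto|].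
          rewrite andb_true_r, orb_false_r. auto. }
        destruct (fin_val a k Hp Hx Hs (j - S k) w') as [q Hq].
        { intros n Hn. unfold w' in Hn. destruct (w n) eqn:Ewn; [|discriminate].
          destruct (Nat.eqb_spec n k); [discriminate|].
          assert (~ (n < k)%nat) by (intro; rewrite (below_k a k w) in Ewn; auto; fold c; lra).
          assert (~ (j < n)%nat) by (intro; rewrite Hw4 in Ewn; auto; discriminate).
          lia. }
        fold c in Hq. set (M := (j - S k)%nat) in *.
        apply Hnd. exists (2 * Z.of_nat (2 ^ N * 2 ^ M) - Z.of_nat (2 ^ M) - Z.of_nat (q * 2 ^ N))%Z, (N + M)%nat.
        rewrite !minus_IZR, mult_IZR, <- !INR_IZR_INZ, !mult_INR, !pow_INR.
        replace (INR 2) with 2 by (simpl; lra).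
        assert (HpM : 0 < 2 ^ M) by (apply pow_lt; lra).
        assert (Haz : a k = s - z) by (unfold z; ring).
        rewrite Haz, HvF, <- Hw', Hq, pow_add. field. lra.
      * destruct (triple a k e F G Hp Hx Hs) as [<-|[<-|E']]; simpl; auto; try congruence.
Qed.
Lemma card_pos a s m : card_fun_eq a s m -> achievement_set a s -> (1 <= m)%nat.
Proof.
  intros [l [_ [Hl Hi]]] [e He]. apply Hi in He. destruct l; [destruct He|]. simpl in Hl. lia.
Qed.

Theorem theorem4p9 (a : nat -> R) :
  (forall n, 0 < a n) ->
  ex_series a ->
  (forall n, a (S n) <= a n) ->
  interval_filling a ->
  (exists k, tail_sum a k > a k /\ forall j, tail_sum a j > a j -> j = k) ->
  range_card_fun_eq a (fun m => m = 1%nat \/ m = 2%nat \/ m = 3%nat) \/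
  range_card_fun_eq a (fun m => m = 1%nat \/ m = 2%nat \/ m = 3%nat \/ m = 4%nat).
Proof.
  intros Hp Hx Hm HI [k [Hk Hu]].
  assert (Hs : forall i, i <> k -> a i = tail_sum a i).
  { intros i Hi. pose proof (IF_le a i Hp Hx Hm HI).
    destruct (Rle_lt_or_eq_dec _ _ H) as [Hl|]; auto. exfalso. apply Hi, Hu. lra. }
  assert (Hb : forall s, achievement_set a s -> exists m, (1 <= m <= 4)%nat /\ card_fun_eq a s m).
  { intros s Has. destruct (enum (fun e => val a e = s)) as [l [Hn [Hl Hi]]].
    { intros l Hn Hl. apply (bound4 a k s l); auto. }
    assert (card_fun_eq a s (length l)) by (apply card_of_list; auto).
    exists (length l). split; auto. split; auto. eapply card_pos; eauto. }
  assert (A0 : achievement_set a 0) by (exists (fun _ => false); apply rep_iff; auto; apply val_zero).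
  assert (Apt : forall p, achievement_set a (a p)) by (intros p; exists (fun n => Nat.eqb n p); apply rep_iff; auto; apply val_pt; auto).
  assert (W3 : exists s, achievement_set a s /\ card_fun_eq a s 3).
  { destruct (classic (exists (q : Z) (M : nat), a k * 2 ^ M = a (S k) * IZR q)) as [[q [M HqM]]|Hnd].
    - exists (a k). split; auto.
      assert (0 < IZR q).
      { assert (0 < a k * 2 ^ M) by (apply Rmult_lt_0_compat; [apply Hp|apply pow_lt; lra]).
        pose proof (Hp (S k)). nra. }
      apply lt_0_IZR in H.
      rewrite <- (Z2Nat.id q), <- INR_IZR_INZ in HqM by lia.
      apply (count3D a k (Z.to_nat q) M); auto.
    - apply (count3ND a k); auto. }
  destruct (classic (exists s, achievement_set a s /\ card_fun_eq a s 4)) as [[s4 [A4 C4]]|H4].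
  - right. split.
    + intros s Has. destruct (Hb s Has) as [m [Hm' Hc]]. exists m. split; auto. lia.
    + intros m [ -> | [ -> | [ -> | -> ] ] ].
      * exists 0. split; auto. apply count1; auto.
      * exists (a (S (S k))). split; auto. apply count2; auto.
      * exact W3.
      * exists s4; auto.
  - left. split.
    + intros s Has. destruct (Hb s Has) as [m [Hm' Hc]]. exists m. split; auto.
      assert (m <> 4%nat) by (intro; subst; apply H4; eauto). lia.
    + intros m [ -> | [ -> | -> ] ].
      * exists 0. split; auto. apply count1; auto.
      * exists (a (S (S k))). split; auto. apply count2; auto.
      * exact W3.
Qed.
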